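(* Let $R$ be a valuation ring and $A$ a nonzero proper ideal of $R$. Then: (1) if $A$ is prime, $R/A$ is coherent; (2) if $A$ is finitely generated, $R/A$ is coherent and self fp-injective; (3) if $A$ is neither prime nor finitely generated, then $\lambda\text{-}\dim(R/A)=2$.
   Context: All rings are commutative with identity. A valuation ring is a ring whose ideals are totally ordered by inclusion. A ring $R$ is self fp-injective if $\mathrm{Ext}^1_R(F,R)=0$ for every finitely presented $R$-module $F$. For an $R$-module $E$, $\lambda_R(E)$ is the supremum of the $n$ for which there is an exact sequence $F_n\to\cdots\to F_0\to E\to0$ with $F_i$ free of finite rank ($-1$ if $E$ is not finitely generated); $\lambda\text{-}\dim(R)$ is the least $n$ (or $\infty$) such that $\lambda_R(E)\ge n$ implies $\lambda_R(E)=\infty$ for all $R$-modules $E$. *)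

(* Defs.v *)
From HB Require Import structures.
From mathcomp Require Import all_boot all_order all_algebra.
Set Implicit Arguments. Unset Strict Implicit. Unset Printing Implicit Defensive.
Import GRing.Theory.
Local Open Scope ring_scope.

Definition is_ideal (R : comNzRingType) (I : R -> Prop) : Prop :=
  [/\ I 0, (forall x y, I x -> I y -> I (x + y)) & (forall r x, I x -> I (r * x))].

Definition valuation_ring (R : comNzRingType) : Prop :=
  forall I J : R -> Prop, is_ideal I -> is_ideal J ->
    (forall x, I x -> J x) \/ (forall x, J x -> I x).

Definition proper_ideal (R : comNzRingType) (I : R -> Prop) : Prop :=
  is_ideal I /\ ~ I 1.

Definition nonzero_ideal (R : comNzRingType) (I : R -> Prop) : Prop :=
  exists x, I x /\ x <> 0.

Definition prime_ideal (R : comNzRingType) (I : R -> Prop) : Prop :=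
  proper_ideal I /\ (forall a b, I (a * b) -> I a \/ I b).

Definition generated_by (R : comNzRingType) (n : nat) (a : 'I_n -> R)
    (I : R -> Prop) : Prop :=
  forall x, I x <-> exists r : 'I_n -> R, x = \sum_(i < n) r i * a i.

Definition fg_ideal (R : comNzRingType) (I : R -> Prop) : Prop :=
  exists n (a : 'I_n -> R), generated_by a I.

(* Coherent ring: every finitely generated ideal I is finitely presented, i.e.
   there is an exact sequence S^m --M--> S^n --a--> I --> 0. *)
Definition coherent (S : comNzRingType) : Prop :=
  forall I : S -> Prop, is_ideal I -> fg_ideal I ->
    exists n (a : 'I_n -> S) m (M : 'M[S]_(m, n)),
      generated_by a I /\
      (forall v : 'rV[S]_n,
          \sum_(i < n) v 0 i * a i = 0 <-> exists w : 'rV[S]_m, w *m M = v).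

(* Self fp-injective: Ext^1_S(F, S) = 0 for every finitely presented F.
   Every finitely presented F is coker (S^m --(. *m M)--> S^n); computing
   Ext^1 from a free resolution ... -> S^m -> S^n -> F -> 0, Ext^1(F,S)=0
   says: every linear form c on S^m vanishing on ker(. *m M) is of the form
   M *m y for a linear form y on S^n. *)
Definition self_fp_injective (S : comNzRingType) : Prop :=
  forall m n (M : 'M[S]_(m, n)) (c : 'cV[S]_m),
    (forall w : 'rV[S]_m, w *m M = 0 -> w *m c = 0) ->
    exists y : 'cV[S]_n, M *m y = c.

Definition lincomb (S : comNzRingType) (E : lmodType S) (k : nat)
    (g : 'I_k -> E) (v : 'rV[S]_k) : E :=
  \sum_(j < k) v 0 j *: g j.

(* lambda_S(E) >= n  (n a natural number): there is an exact sequence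
   F_n --M_{n-1}--> ... --M_0--> F_0 --g--> E --> 0, F_i = S^(k i). *)
Definition lambda_ge (S : comNzRingType) (E : lmodType S) (n : nat) : Prop :=
  exists (k : nat -> nat) (M : forall i, 'M[S]_(k i.+1, k i)) (g : 'I_(k 0) -> E),
    [/\ (forall e : E, exists v, lincomb g v = e),
        ((0 < n)%N -> forall v : 'rV[S]_(k 0),
            lincomb g v = 0 <-> exists w : 'rV[S]_(k 1), w *m M 0 = v) &
        (forall i, (i.+1 < n)%N -> forall v : 'rV[S]_(k i.+1),
            v *m M i = 0 <-> exists w : 'rV[S]_(k i.+2), w *m M i.+1 = v)].

Definition lambda_infinite (S : comNzRingType) (E : lmodType S) : Prop :=
  forall n, lambda_ge E n.

Definition lambda_dim_le (S : comNzRingType) (n : nat) : Prop :=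
  forall E : lmodType S, lambda_ge E n -> lambda_infinite E.

Definition lambda_dim_eq (S : comNzRingType) (n : nat) : Prop :=
  lambda_dim_le S n /\ (forall m, (m < n)%N -> ~ lambda_dim_le S m).

(* Main.v *)
Require Import Defs.
From HB Require Import structures.
From mathcomp Require Import all_boot all_order all_algebra all_fingroup.
From mathcomp Require Import ring.
From mathcomp Require Import generic_quotient ring_quotient.
From Stdlib Require Import ClassicalEpsilon Classical.
Import GRing.Theory.
Local Open Scope ring_scope.

Definition chain (S : comNzRingType) : Prop :=
  forall a b : S, (exists c, b = a * c) \/ (exists c, a = b * c).

Lemma chain_val (R : comNzRingType) : valuation_ring R -> chain R.
Proof.
move=> vR a b.
pose I := fun x : R => exists r, x = r * a.
pose J := fun x : R => exists r, x = r * b.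
have idI : forall c : R, is_ideal (fun x : R => exists r, x = r * c).
  move=> c; split; first by exists 0; rewrite mul0r.
    by move=> x y [r ->] [s ->]; exists (r + s); rewrite mulrDl.
  by move=> r x [s ->]; exists (r * s); rewrite mulrA.
case: (vR I J (idI a) (idI b)) => H.
  have [r ->] : J a by apply: H; exists 1; rewrite mul1r.
  by right; exists r; rewrite mulrC.
have [r ->] : I b by apply: H; exists 1; rewrite mul1r.
by left; exists r; rewrite mulrC.
Qed.

Lemma chain_img (R S : comNzRingType) (f : {rmorphism R -> S}) :
  chain R -> (forall s : S, exists r, f r = s) -> chain S.
Proof.
move=> cR fs a b; have [x <-] := fs a; have [y <-] := fs b.
case: (cR x y) => [[c ->]|[c ->]].
  by left; exists (f c); rewrite rmorphM.
by right; exists (f c); rewrite rmorphM.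
Qed.

Lemma chain_local {S : comNzRingType} : chain S ->
  forall x : S, (exists y, x * y = 1) \/ (exists y, (1 - x) * y = 1).
Proof.
move=> cS x; case: (cS x (1 - x)) => [[c Hc]|[c Hc]].
  left; exists (1 + c); rewrite mulrDr mulr1 -Hc addrCA subrr addr0 //.
right; exists (1 + c); rewrite mulrDr mulr1 -Hc subrK //.
Qed.

Lemma chain_fg {S : comNzRingType} : chain S -> forall k (a : 'I_k -> S),
  exists g, (g = 0 \/ exists j, g = a j) /\ forall i, exists c, a i = c * g.
Proof.
move=> cS; elim=> [|k IH] a.
  by exists 0; split; [left | case].
have [g [Hg Hd]] := IH (fun i => a (widen_ord (leqnSn k) i)).
have Hcase : forall i : 'I_k.+1, i = ord_max \/ exists j : 'I_k, i = widen_ord (leqnSn k) j.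
  move=> i; case: (unliftP ord_max i) => [j ->|->]; last by left.
  by right; exists j; apply: val_inj => /=; rewrite /bump leqNgt ltn_ord.
case: (cS g (a ord_max)) => [[c Hc]|[c Hc]].
  exists g; split.
    by case: Hg => [->|[j ->]]; [left | right; exists (widen_ord (leqnSn k) j)].
  move=> i; case: (Hcase i) => [->|[j ->]]; first by exists c; rewrite Hc mulrC.
  exact: Hd.
exists (a ord_max); split; first by right; exists ord_max.
move=> i; case: (Hcase i) => [->|[j ->]]; first by exists 1; rewrite mul1r.
have [d ->] := Hd j; exists (d * c); by rewrite Hc mulrA mulrAC.
Qed.

Lemma chain_fin (S : comNzRingType) (T : finType) (t0 : T) : chain S ->
  forall a : T -> S, exists t, forall t', exists c, a t' = c * a t.
Proof.
move=> cS a.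
have [g [Hg Hd]] := chain_fg cS #|T| (fun i : 'I_#|T| => a (enum_val i)).
case: Hg => [Hg|[j Hj]].
  exists t0 => t'; have [c Hc] := Hd (enum_rank t'); exists 0.
  by rewrite mul0r -(enum_rankK t') Hc Hg mulr0.
exists (enum_val j) => t'; have [c Hc] := Hd (enum_rank t').
by exists c; rewrite -(enum_rankK t') Hc Hj.
Qed.

Lemma ann_dual {S : comNzRingType} : chain S -> forall d e : S,
  (forall x, x * d = 0 <-> exists c, x = c * e) ->
  e = 0 \/ (forall x, x * e = 0 <-> exists c, x = c * d).
Proof.
move=> cS d e He.
have ed : e * d = 0 by apply/He; exists 1; rewrite mul1r.
case: (eqVneq e 0) => [->|enz]; [by left | right] => x; split; last first.
  by move=> [c ->]; rewrite -mulrA [d * e]mulrC ed mulr0.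
move=> xe; case: (cS d x) => [[c ->]|[t Ht]]; first by exists c; rewrite mulrC.
case: (cS t e) => [[s Hs]|[s Hs]].
-
  have : s * d = 0 by rewrite Ht mulrCA [s * t]mulrC -Hs xe.
  move/He => [u Hu].
  have E : e * (1 - t * u) = 0.
    by rewrite mulrBr mulr1 mulrCA [e * u]mulrC -Hu -Hs subrr.
  case: (chain_local cS (t * u)) => [[v Hv]|[v Hv]].
    by exists (u * v); rewrite Ht -{1}[x]mulr1 -Hv; ring.
  have : e = e * (1 - t * u) * v by rewrite -mulrA Hv mulr1.
  by rewrite E mul0r => e0; move: enz; rewrite e0 eqxx.
-
  have d0 : d = 0 by rewrite Ht Hs mulrA xe mul0r.
  have [c Hc] : exists c, 1 = c * e by apply/He; rewrite d0 mulr0.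
  by exists 0; rewrite mul0r -[x]mulr1 Hc mulrA [x * c]mulrC -mulrA xe mulr0.
Qed.


Definition dmx {S : comNzRingType} m n (d : nat -> S) : 'M[S]_(m, n) :=
  \matrix_(i < m, j < n) (if (i : nat) == j then d i else 0).

Lemma inv2 {S : comNzRingType} {n} {A A' B B' : 'M[S]_n} :
  A' *m A = 1%:M -> A *m A' = 1%:M -> B' *m B = 1%:M -> B *m B' = 1%:M ->
  (B' *m A') *m (A *m B) = 1%:M /\ (A *m B) *m (B' *m A') = 1%:M.
Proof.
move=> h1 h2 h3 h4; split.
  by rewrite mulmxA -[B' *m A' *m A]mulmxA h1 mulmx1 h3.
by rewrite mulmxA -[A *m B *m B']mulmxA h4 mulmx1 h2.
Qed.

Lemma perm_mx_inv {S : comNzRingType} n (i j : 'I_n) :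
  (perm_mx (tperm i j) : 'M[S]_n) *m perm_mx (tperm i j) = 1%:M.
Proof. by rewrite -perm_mxM tperm2 perm_mx1. Qed.

Lemma block_dmx {S : comNzRingType} m n (p : S) (d : nat -> S) :
  block_mx (p%:M : 'M_1) 0 0 (dmx m n d) =
  dmx (1 + m) (1 + n) (fun r => if r is r'.+1 then d r' else p).
Proof.
apply/matrixP => i j; rewrite !mxE.
case: splitP => i' Hi; rewrite !mxE; case: splitP => j' Hj; rewrite !mxE.
- by rewrite Hi Hj (ord1 i') (ord1 j') /= mulr1n.
- by rewrite Hi Hj (ord1 i').
- by rewrite Hi Hj (ord1 j').
- case: i Hi => [i ?] /= ->; case: j Hj => [j ?] /= ->; by rewrite eqSS.
Qed.

Lemma diagonalize {S : comNzRingType} (cS : chain S) m n (M : 'M[S]_(m, n)) :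
  exists (P P' : 'M[S]_m) (Q Q' : 'M[S]_n) (d : nat -> S),
  [/\ P' *m P = 1%:M, P *m P' = 1%:M, Q' *m Q = 1%:M, Q *m Q' = 1%:M &
      P *m M *m Q = dmx m n d].
Proof.
elim: m n M => [|m IH] n M.
  exists 1%:M, 1%:M, 1%:M, 1%:M, (fun _ => 0); split; rewrite ?mulmx1 //.
  by apply/matrixP => -[].
case: n M => [|n] M.
  exists 1%:M, 1%:M, 1%:M, 1%:M, (fun _ => 0); split; rewrite ?mulmx1 //.
  by apply/matrixP => i [].
have [[i0 j0] Hp] := @chain_fin S _ (ord0, ord0) cS (fun q : 'I_m.+1 * 'I_n.+1 => M q.1 q.2).
pose P0 : 'M[S]_m.+1 := perm_mx (tperm ord0 i0).
pose Q0 : 'M[S]_n.+1 := perm_mx (tperm ord0 j0).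
have [M1 M1def] : exists M1, M1 = P0 *m M *m Q0 by eexists.
have M1E : forall i j, M1 i j = M (tperm ord0 i0 i) (tperm ord0 j0 j).
  move=> i j; rewrite M1def /Q0 -[X in perm_mx X](tpermV ord0 j0).
  by rewrite -col_permE -row_permE !mxE.
pose p := M i0 j0.
have Hdiv : forall i j, exists c, M1 i j == c * p.
  move=> i j; have [c Hc] := Hp (tperm ord0 i0 i, tperm ord0 j0 j).
  by exists c; rewrite M1E Hc.
have [C M1C] : exists C, M1 = p *: C.
  exists (\matrix_(i, j) xchoose (Hdiv i j)).
  apply/matrixP => i j; rewrite [RHS]mxE mxE.
  have := xchooseP (Hdiv i j); set c := xchoose _.
  by move=> /eqP ->; rewrite mulrC.
have p00 : M1 0 0 = p by rewrite M1E !tpermL.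
pose cu := ursubmx (C : 'M_(1 + m, 1 + n)).
pose cv := dlsubmx (C : 'M_(1 + m, 1 + n)).
have Hul : ulsubmx (M1 : 'M_(1 + m, 1 + n)) = p%:M.
  apply/matrixP => i j; rewrite !ord1 [RHS]mxE /= mulr1n -p00 !mxE.
  by congr (M1 _ _); apply: val_inj.
have Hur : ursubmx (M1 : 'M_(1 + m, 1 + n)) = p *: cu.
  by apply/matrixP => i j; rewrite M1C !mxE.
have Hdl : dlsubmx (M1 : 'M_(1 + m, 1 + n)) = p *: cv.
  by apply/matrixP => i j; rewrite M1C !mxE.
pose X := drsubmx (M1 : 'M_(1 + m, 1 + n)) - cv *m ursubmx (M1 : 'M_(1 + m, 1 + n)).
pose L : 'M[S]_(1 + m) := block_mx 1%:M 0 (- cv) 1%:M.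
pose L' : 'M[S]_(1 + m) := block_mx 1%:M 0 cv 1%:M.
pose R : 'M[S]_(1 + n) := block_mx 1%:M (- cu) 0 1%:M.
pose R' : 'M[S]_(1 + n) := block_mx 1%:M cu 0 1%:M.
have Hblk : L *m (M1 : 'M_(1 + m, 1 + n)) *m R = block_mx p%:M 0 0 X.
  rewrite -[in LHS](@submxK _ 1 m 1 n M1) Hul Hur Hdl /L /R !mulmx_block.
  rewrite !mul1mx !mulmx1 !mul0mx !mulmx0 !addr0.
  rewrite mulmxN mul_scalar_mx addNr mulNmx mul_mx_scalar addNr mul0mx ?add0r.
  by rewrite /X Hur mulNmx addrC.
have [P1 [P1' [Q1 [Q1' [d1 [h1 h2 h3 h4 h5]]]]]] := IH n X.
pose B1 : 'M[S]_(1 + m) := block_mx 1%:M 0 0 P1.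
pose B1' : 'M[S]_(1 + m) := block_mx 1%:M 0 0 P1'.
pose B2 : 'M[S]_(1 + n) := block_mx 1%:M 0 0 Q1.
pose B2' : 'M[S]_(1 + n) := block_mx 1%:M 0 0 Q1'.
have iB1 : B1' *m B1 = 1%:M /\ B1 *m B1' = 1%:M.
  rewrite /B1 /B1' !mulmx_block !mulmx0 !mul0mx !mulmx1 !addr0 !add0r h1 h2.
  by rewrite -!scalar_mx_block.
have iB2 : B2' *m B2 = 1%:M /\ B2 *m B2' = 1%:M.
  rewrite /B2 /B2' !mulmx_block !mulmx0 !mul0mx !mulmx1 !addr0 !add0r h3 h4.
  by rewrite -!scalar_mx_block.
have iL : L' *m L = 1%:M /\ L *m L' = 1%:M.
  rewrite /L /L' !mulmx_block !mulmx0 !mul0mx !mulmx1 !mul1mx !addr0 !add0r.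
  by rewrite addrN addNr -!scalar_mx_block.
have iR : R' *m R = 1%:M /\ R *m R' = 1%:M.
  rewrite /R /R' !mulmx_block !mulmx0 !mul0mx !mulmx1 !mul1mx !addr0 !add0r.
  by rewrite addrN addNr -!scalar_mx_block.
have iP0 := @perm_mx_inv S _ ord0 i0.
have iQ0 := @perm_mx_inv S _ ord0 j0.
have [iBL1 iBL2] := inv2 iB1.1 iB1.2 iL.1 iL.2.
have [iRB1 iRB2] := inv2 iR.1 iR.2 iB2.1 iB2.2.
have [iP1 iP2] := inv2 iBL1 iBL2 iP0 iP0.
have [iQ1 iQ2] := inv2 iQ0 iQ0 iRB1 iRB2.
exists ((B1 *m L) *m P0), (P0 *m (L' *m B1')), (Q0 *m (R *m B2)), ((B2' *m R') *m Q0).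
exists (fun r => if r is r'.+1 then d1 r' else p); split; [exact: iP1 | exact: iP2 | exact: iQ1 | exact: iQ2 | ].
have -> : B1 *m L *m P0 *m M *m (Q0 *m (R *m B2)) = B1 *m (L *m (M1 : 'M_(1 + m, 1 + n)) *m R) *m B2.
  by rewrite M1def !mulmxA.
rewrite Hblk /B1 /B2 !mulmx_block !mulmx0 !mul0mx !mulmx1 !mul1mx !addr0 !add0r h5.
by rewrite mul0mx (block_dmx m n p d1).
Qed.


Lemma sum_deltaM_in {S : comNzRingType} m (F : 'I_m -> S) (d : nat -> S) j (hj : (j < m)%N) :
  \sum_(i < m) F i * (if (i : nat) == j then d i else 0) = F (Ordinal hj) * d j.
Proof.
rewrite (bigD1 (Ordinal hj)) //= eqxx big1 ?addr0 // => i Hi.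
rewrite ifF ?mulr0 //; apply/negbTE; move: Hi; apply: contra => /eqP H.
by apply/eqP/val_inj.
Qed.

Lemma sum_deltaM_out {S : comNzRingType} m (F : 'I_m -> S) (d : nat -> S) j (hj : (m <= j)%N) :
  \sum_(i < m) F i * (if (i : nat) == j then d i else 0) = 0.
Proof.
rewrite big1 // => i _; rewrite ifF ?mulr0 //; apply/negbTE.
by rewrite neq_ltn (leq_trans (ltn_ord i) hj).
Qed.

Lemma sum_delta_in {S : comNzRingType} m (G : 'I_m -> S) j (hj : (j < m)%N) :
  \sum_(i < m) (if (i : nat) == j then G i else 0) = G (Ordinal hj).
Proof.
rewrite (bigD1 (Ordinal hj)) //= eqxx big1 ?addr0 // => i Hi.
rewrite ifF //; apply/negbTE; move: Hi; apply: contra => /eqP H.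
by apply/eqP/val_inj.
Qed.

Lemma dmx_norm {S : comNzRingType} m n (d : nat -> S) :
  dmx m n d = dmx m n (fun r => if (r < m)%N && (r < n)%N then d r else 0).
Proof.
apply/matrixP => i j; rewrite !mxE; case: eqP => // Hij.
by rewrite ltn_ord Hij ltn_ord.
Qed.

Lemma ker_dmx {S : comNzRingType} {m n} {d : nat -> S} :
  (forall r, (n <= r)%N -> d r = 0) ->
  forall v : 'rV[S]_m, v *m dmx m n d = 0 <-> forall i : 'I_m, v 0 i * d i = 0.
Proof.
move=> hd v; split => [H i|H].
  case: (ltnP i n) => hi; last by rewrite hd ?mulr0.
  have := congr1 (fun M : 'rV_n => M 0 (Ordinal hi)) H; rewrite !mxE /=.
  under eq_bigr => k _ do rewrite mxE.
  rewrite (sum_deltaM_in _ (fun k => v 0 k) d _ (ltn_ord i)) => <-.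
  by congr (_ * _); congr (v 0 _); exact: val_inj.
apply/matrixP => i j; rewrite !mxE big1 // => k _; rewrite mxE.
by case: eqP => _; rewrite ?mulr0 // (ord1 i) H.
Qed.

Lemma im_dmx {S : comNzRingType} {m n} {d : nat -> S} :
  (forall r, (m <= r)%N -> d r = 0) ->
  forall u : 'rV[S]_n, (exists w : 'rV[S]_m, w *m dmx m n d = u) <->
     forall j : 'I_n, exists c, u 0 j = c * d j.
Proof.
move=> hd u; split => [[w <-] j|H].
  rewrite !mxE; under eq_bigr => k _ do rewrite mxE.
  case: (ltnP j m) => hj.
    by rewrite sum_deltaM_in; eexists.
  by rewrite sum_deltaM_out //; exists 0; rewrite mul0r.
have H' : forall j, exists c, u 0 j == c * d j.
  by move=> j; have [c Hc] := H j; exists c; rewrite Hc.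
pose c := fun j => xchoose (H' j).
have Hc : forall j, u 0 j = c j * d j by move=> j; exact/eqP/(xchooseP (H' j)).
exists (\row_k \sum_(j < n) (if (j : nat) == k then c j else 0)).
apply/matrixP => i j; rewrite ord1 !mxE; under eq_bigr => k _ do rewrite !mxE.
case: (ltnP j m) => hj.
  rewrite sum_deltaM_in /= sum_delta_in Hc; congr (c _ * _); exact: val_inj.
by rewrite sum_deltaM_out // Hc hd ?mulr0.
Qed.


Definition princ {S : comNzRingType} (x : S) : Prop :=
  exists e, forall y, y * x = 0 <-> exists c, y = c * e.

Lemma princ0 {S : comNzRingType} : princ (0 : S).
Proof. by exists 1 => y; rewrite mulr0; split => // _; exists y; rewrite mulr1. Qed.

Lemma princ_of_ker {S : comNzRingType} (cS : chain S) {m n} {d : nat -> S}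
  (hd : forall r, (n <= r)%N -> d r = 0) {k} (N : 'M[S]_(k, m)) :
  (forall v : 'rV_m, v *m dmx m n d = 0 <-> exists z : 'rV_k, z *m N = v) ->
  forall i : 'I_m, princ (d i).
Proof.
move=> HK i; have Hker := ker_dmx hd.
have HN : forall s, N s i * d i = 0.
  move=> s; have : (row s N) *m dmx m n d = 0.
    by apply/HK; exists (delta_mx 0 s); rewrite -rowE.
  by move/Hker => /(_ i); rewrite mxE.
have [g [Hg Hd]] := chain_fg cS _ (fun s => N s i).
exists g => x; split.
- move=> Hx.
  have : (\row_l (if l == i then x else 0)) *m dmx m n d = 0.
    by apply/Hker => l; rewrite mxE; case: eqP => [->|]; rewrite ?mul0r.
  move/HK => [z Hz]; have := congr1 (fun M : 'rV_m => M 0 i) Hz.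
  rewrite !mxE eqxx => <-.
  apply: (big_ind (fun y => exists c, y = c * g)).
  + by exists 0; rewrite mul0r.
  + by move=> ? ? [c1 ->] [c2 ->]; exists (c1 + c2); rewrite mulrDl.
  + by move=> s _; have [c ->] := Hd s; exists (z 0 s * c); rewrite mulrA.
- move=> [c ->]; case: Hg => [->|[j ->]]; first by rewrite mulr0 mul0r.
  by rewrite -mulrA HN mulr0.
Qed.

Lemma res2_diag {S : comNzRingType} (cS : chain S) {E : lmodType S} {k0 k1 k2}
  {g : 'I_k0 -> E} {M0 : 'M[S]_(k1, k0)} {M1 : 'M[S]_(k2, k1)} :
  (forall v, lincomb g v = 0 <-> exists w : 'rV_k1, w *m M0 = v) ->
  (forall v : 'rV_k1, v *m M0 = 0 <-> exists w : 'rV_k2, w *m M1 = v) ->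
  exists (Q Q' : 'M[S]_k0) (d : nat -> S),
  [/\ Q' *m Q = 1%:M /\ Q *m Q' = 1%:M,
      (forall r, (k0 <= r)%N \/ (k1 <= r)%N -> d r = 0),
      (forall v, lincomb g v = 0 <-> exists w : 'rV_k1, w *m (dmx k1 k0 d *m Q') = v),
      (forall v : 'rV_k1, v *m (dmx k1 k0 d *m Q') = 0 <-> forall i : 'I_k1, v 0 i * d i = 0) &
      (forall r, princ (d r))].
Proof.
move=> H0 H1.
have [P [P' [Q [Q' [d0 [p1 p2 q1 q2 hD]]]]]] := diagonalize cS _ _ M0.
pose d := fun r => if (r < k1)%N && (r < k0)%N then d0 r else 0.
have hD' : P *m M0 *m Q = dmx k1 k0 d by rewrite hD dmx_norm.
have hdz : forall r, (k0 <= r)%N \/ (k1 <= r)%N -> d r = 0.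
  by move=> r [] h; rewrite /d; rewrite leqNgt in h; rewrite (negbTE h) ?andbF.
have hdz0 : forall r, (k0 <= r)%N -> d r = 0 by move=> r h; apply: hdz; left.
have M0E : M0 = P' *m dmx k1 k0 d *m Q'.
  by rewrite -hD' !mulmxA p1 mul1mx -mulmxA q2 mulmx1.
have DQ : dmx k1 k0 d *m Q' = P *m M0 by rewrite -hD' -mulmxA q2 mulmx1.
have kerDQ : forall v : 'rV_k1, v *m (dmx k1 k0 d *m Q') = 0 <-> v *m dmx k1 k0 d = 0.
  move=> v; split => H.
    by rewrite -[v *m _]mulmx1 -q1 mulmxA -[v *m _ *m Q']mulmxA H mul0mx.
  by rewrite mulmxA H mul0mx.
exists Q, Q', d; split => //.
- move=> v; rewrite H0; split => [[w <-]|[w <-]].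
    by exists (w *m P'); rewrite M0E !mulmxA.
  by exists (w *m P); rewrite DQ mulmxA.
- by move=> v; rewrite kerDQ; exact: ker_dmx.
move=> r; case: (ltnP r k1) => hr; last by rewrite hdz; [exact: princ0 | right].
apply: (princ_of_ker cS hdz0 (M1 *m P')) (Ordinal hr) => v.
rewrite -kerDQ DQ mulmxA H1; split => [[w Hw]|[w Hw]].
  by exists w; rewrite mulmxA Hw -mulmxA p2 mulmx1.
by exists w; rewrite -Hw !mulmxA -[_ *m P' *m P]mulmxA p1 mulmx1.
Qed.


Lemma ker_sq {S : comNzRingType} K (x : nat -> S) (v : 'rV[S]_K) :
  v *m dmx K K x = 0 <-> forall i : 'I_K, v 0 i * x i = 0.
Proof.
rewrite dmx_norm (ker_dmx (d := fun r => if (r < K)%N && (r < K)%N then x r else 0)).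
  by split => H i; move: (H i); rewrite ltn_ord.
by move=> r h; rewrite leqNgt in h; rewrite (negbTE h).
Qed.

Lemma exact_sq {S : comNzRingType} K (x z : nat -> S) :
  (forall (r : 'I_K) y, y * x r = 0 <-> exists c, y = c * z r) ->
  forall v : 'rV[S]_K, (forall i : 'I_K, v 0 i * x i = 0) <->
     exists w : 'rV[S]_K, w *m dmx K K z = v.
Proof.
move=> H v; rewrite dmx_norm (im_dmx (d := fun r => if (r < K)%N && (r < K)%N then z r else 0)).
  by split => H' i; move: (H' i); rewrite ltn_ord /= H.
by move=> r h; rewrite leqNgt in h; rewrite (negbTE h).
Qed.

Lemma lambda2 {S : comNzRingType} (cS : chain S) : lambda_dim_le S 2.
Proof.
move=> E [k [M [g [Hs Hb Hc]]]].
have [Q [Q' [d [[q1 q2] hdz HK0 HK1 Hpr]]]] := res2_diag cS (Hb isT) (Hc 0%N isT).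
pose gen := fun x : S => epsilon (inhabits 0) (fun e => forall y, y * x = 0 <-> exists c, y = c * e).
have genP : forall x, princ x -> forall y, y * x = 0 <-> exists c, y = c * gen x.
  by move=> x Hx; exact: (epsilon_spec (inhabits 0) _ Hx).
have genQ : forall x, princ x -> princ (gen x).
  move=> x Hx; case: (ann_dual cS _ _ (genP x Hx)) => [->|H]; [exact: princ0 | by exists x].
pose es := fun i r => iter i.+1 gen (d r).
have esP : forall i r, princ (es i r).
  by elim=> [|i IH] r; apply: genQ; [exact: Hpr | exact: IH].
have esE : forall i r y, y * es i r = 0 <-> exists c, y = c * es i.+1 r.
  by move=> i r; exact: genP.
have es0 : forall r y, y * d r = 0 <-> exists c, y = c * es 0%N r.
  by move=> r; exact: genP.
pose k' := fun i : nat => if i is 0 then k 0%N else k 1%N.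
pose M' := fun i => match i as i0 return 'M[S]_(k' i0.+1, k' i0) with
                    | 0 => dmx (k 1%N) (k 0%N) d *m Q'
                    | i'.+1 => dmx (k 1%N) (k 1%N) (es i') end.
move=> n; exists k', M', g; split => //.
move=> [|i] Hi v /=.
  by rewrite HK1; apply: exact_sq => r; exact: es0.
by rewrite ker_sq; apply: exact_sq => r; exact: esE.
Qed.


Lemma trmx_dmx {S : comNzRingType} m n (d : nat -> S) : (dmx m n d)^T = dmx n m d.
Proof. by apply/matrixP => i j; rewrite !mxE eq_sym; case: eqP => // ->. Qed.

Lemma fpinj_of {S : comNzRingType} (cS : chain S)
  (Hann : forall d : S, exists e, (forall x, x * d = 0 <-> exists c, x = c * e) /\
                                  (e = 0 -> exists y, d * y = 1)) :
  self_fp_injective S.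
Proof.
move=> m n M c Hc.
have [P [P' [Q [Q' [d0 [p1 p2 q1 q2 hD]]]]]] := diagonalize cS _ _ M.
pose d := fun r => if (r < m)%N && (r < n)%N then d0 r else 0.
have hD' : P *m M *m Q = dmx m n d by rewrite hD dmx_norm.
have hdn : forall r, (n <= r)%N -> d r = 0.
  by move=> r h; rewrite /d; rewrite leqNgt in h; rewrite (negbTE h) andbF.
have ME : M = P' *m dmx m n d *m Q'.
  by rewrite -hD' !mulmxA p1 mul1mx -mulmxA q2 mulmx1.
have [c' c'def] : exists c', c' = P *m c by eexists.
have Hc' : forall w' : 'rV_m, w' *m dmx m n d = 0 -> w' *m c' = 0.
  move=> w' H.
  have : w' *m P *m M = 0.
    by rewrite ME !mulmxA -[w' *m P *m P']mulmxA p2 mulmx1 H mul0mx.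
  by move/Hc; rewrite c'def mulmxA.
have Hrow : forall i : 'I_m, exists y, c' i 0 = y * d i.
  move=> i; have [e [He He0]] := Hann (d i).
  case: (eqVneq e 0) => [e0|enz].
    have [y Hy] := He0 e0; exists (c' i 0 * y).
    by rewrite -mulrA [y * d i]mulrC Hy mulr1.
  case: (ann_dual cS _ _ He) => [e0|Hd]; first by rewrite e0 eqxx in enz.
  apply/Hd; rewrite mulrC.
  pose w' := \row_l (if l == i then e else 0) : 'rV_m.
  have : w' *m dmx m n d = 0.
    apply/(ker_dmx hdn) => l; rewrite mxE; case: eqP => [->|_]; last by rewrite mul0r.
    by apply/He; exists 1; rewrite mul1r.
  move/Hc' => /(congr1 (fun M : 'M_(1, 1) => M 0 0)); rewrite !mxE.
  rewrite (bigD1 i) //= mxE eqxx big1 ?addr0 // => l /negbTE Hl.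
  by rewrite mxE Hl mul0r.
have [w Hw] : exists w : 'rV_n, w *m dmx n m d = c'^T.
  by apply/(im_dmx hdn) => j; rewrite mxE; exact: Hrow.
exists (Q *m w^T).
rewrite ME !mulmxA -[P' *m _ *m Q' *m Q]mulmxA q1 mulmx1.
have -> : P' *m dmx m n d *m w^T = P' *m c' by rewrite -mulmxA -[c']trmxK -Hw trmx_mul trmx_dmx.
by rewrite c'def mulmxA p1 mul1mx.
Qed.

Lemma coherent_of {S : comNzRingType} (cS : chain S)
  (Hann : forall d : S, princ d) : coherent S.
Proof.
move=> I [I0 IA IM] [n [a Hgen]].
have [g [Hg Hd]] := chain_fg cS _ a.
have gI : I g.
  case: Hg => [->|[j ->]] //; apply/Hgen.
  exists (fun i => if i == j then 1 else 0).
  rewrite (bigD1 j) //= eqxx mul1r big1 ?addr0 // => i /negbTE ->; by rewrite mul0r.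
have [e He] := Hann g.
exists 1%N, (fun _ => g), 1%N, (\matrix_(i, j) e : 'M_(1, 1)); split.
- move=> x; split.
    move/Hgen => [r ->].
    have [c Hc] : exists c, \sum_(i < n) r i * a i = c * g.
      apply: (big_ind (fun y => exists c, y = c * g)).
      + by exists 0; rewrite mul0r.
      + by move=> ? ? [c1 ->] [c2 ->]; exists (c1 + c2); rewrite mulrDl.
      + by move=> s _; have [c ->] := Hd s; exists (r s * c); rewrite mulrA.
    by exists (fun _ => c); rewrite big_ord1.
  by move=> [r ->]; rewrite big_ord1; apply: IM.
move=> v; rewrite big_ord1; split.
  move/He => [c Hc]; exists (\row_ _ c).
  by apply/matrixP => i j; rewrite !ord1 !mxE big_ord1 !mxE Hc.
move=> [w <-]; rewrite !mxE big_ord1 !mxE.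
by apply/He; exists (w 0 0).
Qed.


Lemma chain_min {S : comNzRingType} (cS : chain S) : forall k (a : 'I_k -> S),
  exists g, (g = 1 \/ exists j, g = a j) /\ forall i, exists c, g = c * a i.
Proof.
elim=> [|k IH] a; first by exists 1; split; [left | case].
have [g [Hg Hd]] := IH (fun i => a (widen_ord (leqnSn k) i)).
have Hcase : forall i : 'I_k.+1, i = ord_max \/ exists j : 'I_k, i = widen_ord (leqnSn k) j.
  move=> i; case: (unliftP ord_max i) => [j ->|->]; last by left.
  by right; exists j; apply: val_inj => /=; rewrite /bump leqNgt ltn_ord.
case: (cS g (a ord_max)) => [[c Hc]|[c Hc]].
  exists (a ord_max); split; first by right; exists ord_max.
  move=> i; case: (Hcase i) => [->|[j ->]]; first by exists 1; rewrite mul1r.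
  by have [d Hd'] := Hd j; exists (c * d); rewrite Hc Hd' mulrC mulrA.
exists g; split.
  by case: Hg => [->|[j ->]]; [left | right; exists (widen_ord (leqnSn k) j)].
move=> i; case: (Hcase i) => [->|[j ->]]; first by exists c; rewrite Hc mulrC.
exact: Hd.
Qed.

Lemma princ_assoc {S : comNzRingType} (b d : S) c1 c2 :
  b = c1 * d -> d = c2 * b -> princ d -> princ b.
Proof.
move=> h1 h2 [e He]; exists e => y; rewrite -He; split => H.
  by rewrite h2 mulrCA H mulr0.
by rewrite h1 mulrCA H mulr0.
Qed.

Lemma not_lambda2 {S : comNzRingType} (cS : chain S) (E : lmodType S) (u : E) (b : S)
  (Hsp : forall e : E, exists s, e = s *: u)
  (Hann : forall s, s *: u = 0 <-> exists c, s = c * b)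
  (Hnp : ~ princ b) : ~ lambda_ge E 2.
Proof.
move=> [k [M [g [Hs Hb Hc]]]].
have [Q [Q' [d [[q1 q2] hdz HK0 HK1 Hpr]]]] := res2_diag cS (Hb isT) (Hc 0%N isT).
have bu : b *: u = 0 by apply/Hann; exists 1; rewrite mul1r.
have annE : forall x, (exists c, x = c * b) <-> forall j : 'I_(k 0%N), x *: g j = 0.
  move=> x; split.
    move=> [c ->] j; have [s ->] := Hsp (g j).
    by rewrite scalerA mulrAC -scalerA bu scaler0.
  move=> H; apply/Hann; have [v <-] := Hs u.
  rewrite /lincomb scaler_sumr big1 // => j _.
  by rewrite scalerA mulrC -scalerA H scaler0.
have hdk1 : forall r, (k 1%N <= r)%N -> d r = 0 by move=> r h; apply: hdz; right.
have Hg : forall x (j : 'I_(k 0%N)), x *: g j = 0 <->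
            forall l : 'I_(k 0%N), exists c, x * Q j l = c * d l.
  move=> x j.
  pose vj := \row_l (if l == j then x else 0) : 'rV_(k 0%N).
  have -> : x *: g j = lincomb g vj.
    rewrite /lincomb (bigD1 j) //= mxE eqxx big1 ?addr0 // => i /negbTE Hi.
    by rewrite mxE Hi scale0r.
  have vjQ : forall l, (vj *m Q) 0 l = x * Q j l.
    move=> l; rewrite mxE (bigD1 j) //= mxE eqxx big1 ?addr0 // => i /negbTE Hi.
    by rewrite mxE Hi mul0r.
  rewrite HK0; split.
    move=> [w Hw] l; rewrite -vjQ.
    have : exists w0, w0 *m dmx (k 1%N) (k 0%N) d = vj *m Q.
      by exists w; rewrite -Hw -!mulmxA q1 mulmx1.
    by move/(im_dmx hdk1) => /(_ l).
  move=> H; have [w Hw] : exists w0, w0 *m dmx (k 1%N) (k 0%N) d = vj *m Q.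
    by apply/(im_dmx hdk1) => l; rewrite vjQ; exact: H.
  by exists w; rewrite mulmxA Hw -mulmxA q2 mulmx1.
have key : forall x, (exists c, x = c * b) <-> forall l : 'I_(k 0%N), exists c, x = c * d l.
  move=> x; rewrite annE; split => H.
    move=> l; have -> : x = \sum_j Q' l j * (x * Q j l).
      have : (Q' *m Q) l l = 1 by rewrite q1 mxE eqxx.
      rewrite mxE => E1; rewrite -[LHS]mulr1 -E1 mulr_sumr.
      by apply: eq_bigr => j _; rewrite mulrCA.
    apply: (big_ind (fun y => exists c, y = c * d l)).
    + by exists 0; rewrite mul0r.
    + by move=> ? ? [c1 ->] [c2 ->]; exists (c1 + c2); rewrite mulrDl.
    + move=> j _; have [c ->] := (Hg x j).1 (H j) l.
      by exists (Q' l j * c); rewrite mulrA.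
  move=> j; apply/Hg => l; have [c ->] := H l.
  by exists (c * Q j l); rewrite mulrAC.
have [g0 [Hg0 Hd0]] := chain_min cS _ (fun l : 'I_(k 0%N) => d l).
case: Hg0 => [g1|[j gj]].
  have [c Hc1] : exists c, 1 = c * b by apply/key => l; rewrite -g1; exact: Hd0.
  apply: Hnp; exists 0 => y; split => [yb|[c0 ->]]; last by rewrite mulr0 mul0r.
  by exists 0; rewrite mul0r -[y]mulr1 Hc1 mulrCA yb mulr0.
have [c1 Hc1] : exists c, b = c * d j by exact: ((key b).1 (ex_intro _ 1 (esym (mul1r b))) j).
have [c2 Hc2] : exists c, d j = c * b by apply/key => l; rewrite -gj; exact: Hd0.
exact: (Hnp (princ_assoc _ _ _ _ Hc1 Hc2 (Hpr j))).
Qed.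


Local Open Scope quotient_scope.

Definition asb (P : Prop) : bool :=
  if excluded_middle_informative P then true else false.

Lemma asbP (P : Prop) : reflect P (asb P).
Proof. by rewrite /asb; case: excluded_middle_informative => H; constructor. Qed.

Definition bideal {S : comNzRingType} (b : S) (x : S) : bool :=
  asb (exists c, x = c * b).

Lemma bideal_zmod {S : comNzRingType} (b : S) : zmod_closed (bideal b).
Proof.
split; first by apply/asbP; exists 0; rewrite mul0r.
move=> x y /asbP [c1 ->] /asbP [c2 ->]; apply/asbP; exists (c1 - c2).
by rewrite mulrBl.
Qed.

HB.instance Definition _ (S : comNzRingType) (b : S) :=
  GRing.isZmodClosed.Build S (bideal b) (bideal_zmod b).

Notation Eb b := (Quotient.quot (GRing.ZmodClosed.clone _ (bideal b) _)).
Import Quotient.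

Section EbLmod.
Variables (S : comNzRingType) (b : S).
Local Notation E := (Eb b).

Lemma piEb (x y : S) : (\pi_E x = \pi_E y) <-> exists c, x - y = c * b.
Proof.
split => [H|H].
  apply/asbP; rewrite -[asb _]/(x - y \in bideal b) Quotient.idealrBE.
  by apply/eqP.
apply/eqP; rewrite -Quotient.idealrBE; exact/asbP.
Qed.

Definition escale (a : S) (q : E) : E := \pi_E (a * repr q).

Lemma escale_pi a x : escale a (\pi_E x) = \pi_E (a * x).
Proof.
rewrite /escale; apply/piEb.
have : \pi_E (repr (\pi_E x)) = \pi_E x by rewrite reprK.
by move/piEb => [c Hc]; exists (a * c); rewrite -mulrBr Hc mulrA.
Qed.

Lemma pi_addE (x y : S) : \pi_E (x + y) = \pi_E x + \pi_E y.
Proof. by rewrite raddfD. Qed.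

Lemma escaleA a c v : escale a (escale c v) = escale (a * c) v.
Proof. by rewrite -[v]reprK; move: (repr v) => x; rewrite (escale_pi c x) !escale_pi mulrA. Qed.

Lemma escale1 : left_id 1 escale.
Proof. by move=> v; rewrite -[v]reprK; move: (repr v) => x; rewrite escale_pi mul1r. Qed.

Lemma escaleDr : right_distributive escale +%R.
Proof.
move=> a u v; rewrite -[u]reprK -[v]reprK; move: (repr u) (repr v) => x y.
rewrite -pi_addE (escale_pi a (x + y)) (escale_pi a x) (escale_pi a y) mulrDr.
exact: pi_addE.
Qed.

Lemma escaleDl v : {morph escale^~ v : a c / a + c}.
Proof. by move=> a c; rewrite -[v]reprK; move: (repr v) => x; rewrite (escale_pi (a + c) x) (escale_pi a x) (escale_pi c x) mulrDl pi_addE. Qed.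

End EbLmod.

HB.instance Definition _ (S : comNzRingType) (b : S) :=
  GRing.Zmodule_isLmodule.Build S (Eb b) (@escaleA S b) (@escale1 S b)
    (@escaleDr S b) (@escaleDl S b).

Lemma Eb_props {S : comNzRingType} (b : S) :
  exists u : Eb b, (forall e : Eb b, exists s, e = s *: u) /\
                   (forall s, s *: u = 0 <-> exists c, s = c * b).
Proof.
exists (\pi_(Eb b) 1); split.
  move=> e; exists (repr e).
  by rewrite [_ *: _]escale_pi mulr1 reprK.
move=> s; rewrite [_ *: _]escale_pi mulr1 -[0 : Eb b](raddf0 \pi_(Eb b)) piEb subr0.
by [].
Qed.


Theorem corollary2p14 (R : comNzRingType) (A : R -> Prop)
    (S : comNzRingType) (f : {rmorphism R -> S}) :
  valuation_ring R -> is_ideal A -> nonzero_ideal A -> ~ A 1 ->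
  (forall s : S, exists r : R, f r = s) ->
  (forall r : R, f r = 0 <-> A r) ->
  [/\ (prime_ideal A -> coherent S),
      (fg_ideal A -> coherent S /\ self_fp_injective S) &
      (~ prime_ideal A -> ~ fg_ideal A -> lambda_dim_eq S 2)].
Proof.
move=> vR iA nzA nA1 fs fk.
have cR := chain_val R vR; have cS := chain_img _ _ f cR fs.
have iA' := iA; case: iA' => A0 AD AM.
split.
-
  move=> [_ Hpr]; apply: coherent_of cS _ => d.
  case: (eqVneq d 0) => [->|dnz]; first exact: princ0.
  exists 0 => y; split; last by move=> [c ->]; rewrite mulr0 mul0r.
  have [r1 Hr1] := fs y; have [r2 Hr2] := fs d.
  rewrite -Hr1 -Hr2 -rmorphM => /fk /Hpr [/fk ->|/fk H2]; first by exists 0; rewrite mulr0.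
  by move: dnz; rewrite -Hr2 H2 eqxx.
-
  move=> [n [a Hgen]].
  have [al [Hal Hd]] := chain_fg cR n a.
  have Aal : A al.
    case: Hal => [->|[j ->]] //; apply/Hgen.
    exists (fun i => if i == j then 1 else 0).
    rewrite (bigD1 j) //= eqxx mul1r big1 ?addr0 // => i /negbTE ->; by rewrite mul0r.
  have HA : forall x, A x <-> exists r, x = r * al.
    move=> x; split; last by move=> [r ->]; apply: AM.
    move/Hgen => [r ->].
    apply: (big_ind (fun y => exists c, y = c * al)).
    + by exists 0; rewrite mul0r.
    + by move=> ? ? [c1 ->] [c2 ->]; exists (c1 + c2); rewrite mulrDl.
    + by move=> s _; have [c ->] := Hd s; exists (r s * c); rewrite mulrA.
  have alnz : al != 0.
    case: nzA => x [/HA [r ->] xnz]; apply/eqP => al0; apply: xnz.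
    by rewrite al0 mulr0.
  have Hann2 : forall d : S, exists e, (forall x, x * d = 0 <-> exists c, x = c * e) /\
                                  (e = 0 -> exists y, d * y = 1).
    move=> d; have [de <-] := fs d.
    case: (cR de al) => [[g Hg]|[c Hc]]; last first.
      have fd0 : f de = 0 by apply/fk/HA; exists c; rewrite Hc mulrC.
      exists 1; split.
        by move=> x; rewrite fd0 mulr0; split => // _; exists x; rewrite mulr1.
      by move=> /eqP; rewrite oner_eq0.
    exists (f g); split.
      move=> x; split; last first.
        move=> [c ->]; rewrite -mulrA -rmorphM [g * de]mulrC -Hg.
        by rewrite (fk al).2 // mulr0.
      have [ch <-] := fs x; rewrite -rmorphM => /fk /HA [rho Hrho].
      have Hz : de * (ch - rho * g) = 0.
        by rewrite mulrBr [de * ch]mulrC Hrho Hg; ring.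
      case: (cR (ch - rho * g) g) => [[s Hs]|[s Hs]]; last first.
        exists (f (rho + s)); rewrite -rmorphM; congr (f _).
        have -> : ch = (ch - rho * g) + rho * g by rewrite subrK.
        by rewrite Hs; ring.
      by move: alnz; rewrite Hg Hs mulrA Hz mul0r eqxx.
    move=> /(fk g).1 /HA [rho Hrho].
    have E0 : g * (1 - rho * de) = 0 by rewrite mulrBr mulr1 {1}Hrho Hg; ring.
    case: (chain_local cR (rho * de)) => [[v Hv]|[w Hw]].
      exists (f (rho * v)); rewrite -rmorphM -(rmorph1 f); congr (f _).
      by rewrite -Hv; ring.
    have g0 : g = 0 by rewrite -[g]mulr1 -Hw mulrA E0 mul0r.
    by move: alnz; rewrite Hg g0 mulr0 eqxx.
  split; first by apply: coherent_of cS _ => d; have [e [He _]] := Hann2 d; exists e.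
  exact: fpinj_of cS Hann2.
move=> Hnp Hnfg.
have [al [be [Hab [Hal Hbe]]]] : exists al be, A (al * be) /\ ~ A al /\ ~ A be.
  apply: NNPP => H; apply: Hnp; split; first by split.
  move=> a b Hab; case: (classic (A a)) => Ha; [by left | right].
  apply: NNPP => Hb; apply: H; exists a, b; split => //.
have Hnpb : ~ princ (f al).
  move=> [e He]; have [ep Hep] := fs e.
  have fbe : f be * f al = 0 by rewrite -rmorphM mulrC; apply/fk.
  have enz : e != 0.
    apply/eqP => e0; have [c Hc] := (He (f be)).1 fbe.
    by apply: Hbe; apply/fk; rewrite Hc e0 mulr0.
  have eal : e * f al = 0 by apply/He; exists 1; rewrite mul1r.
  apply: Hnfg; exists 1%N, (fun _ => al * ep) => x; split.
    move=> Ax; case: (cR al x) => [[y Hy]|[t Ht]]; last first.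
      by exfalso; apply: Hal; rewrite Ht mulrC; exact: AM.
    have : f y * f al = 0 by rewrite -rmorphM mulrC -Hy; apply/fk.
    move/He => [c Hc]; have [ga Hga] := fs c.
    have Ha' : A (y - ga * ep).
      by apply/fk; rewrite rmorphB rmorphM Hga Hep Hc subrr.
    case: (cR (y - ga * ep) ep) => [[s Hs]|[s Hs]].
      exfalso; move: enz; rewrite -Hep Hs rmorphM.
      by move/fk: Ha' => ->; rewrite mul0r eqxx.
    exists (fun _ => ga + s); rewrite big_ord1.
    rewrite Hy; have -> : y = (y - ga * ep) + ga * ep by rewrite subrK.
    by rewrite Hs; ring.
  move=> [r ->]; rewrite big_ord1; apply: AM; apply/fk.
  by rewrite rmorphM Hep mulrC.
have [u [Hsp Hann]] := Eb_props (f al).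
have HE1 : lambda_ge (Eb (f al)) 1.
  exists (fun _ => 1%N), (fun _ => \matrix_(i, j) f al), (fun _ => u); split.
  - move=> e; have [s ->] := Hsp e; exists (\row_ _ s).
    by rewrite /lincomb big_ord1 mxE.
  - move=> _ v; rewrite /lincomb big_ord1 Hann; split.
      move=> [c Hc]; exists (\row_ _ c).
      by apply/matrixP => i j; rewrite !ord1 !mxE big_ord1 !mxE Hc.
    move=> [w <-]; rewrite !mxE big_ord1 !mxE.
    by exists (w 0 0).
  - by [].
have HE0 : lambda_ge (Eb (f al)) 0.
  case: HE1 => k [M [g [H1 H2 H3]]]; exists k, M, g; split => //.
have NE := not_lambda2 cS _ _ _ Hsp Hann Hnpb.
split; first exact: lambda2 cS.
move=> [|[|m]] // _ Hle.
  by apply: NE; apply: (Hle _ HE0).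
by apply: NE; apply: (Hle _ HE1).
Qed.
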